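(* Let $\sigma$ be a permutation of $[n]$ and let $T_\sigma=\Psi(\sigma)$. Then $\mathrm{inv}(\sigma)=\mathrm{inv}(T_\sigma)$, $\mathrm{RLmin}(\sigma)=|R_{T_\sigma}|$, and $\mathrm{IDes}(\sigma)=\mathrm{IDes}(T_\sigma)$.
   Context: The map $\Psi$ sends a word $\pi$ of distinct integers to an increasing binary tree: $\Psi(\emptyset)=\emptyset$; otherwise write $\pi=\sigma\, i\,\tau$ with $i$ the least letter, and let $\Psi(\pi)$ have root $i$, left subtree $\Psi(\sigma)$, right subtree $\Psi(\tau)$. For a permutation $\sigma=\sigma_1\cdots\sigma_n$: $\mathrm{inv}(\sigma)$ is the number of pairs $i<j$ with $\sigma_i>\sigma_j$; $\mathrm{RLmin}(\sigma)$ is the number of $\sigma_i$ with $\sigma_j>\sigma_i$ for all $j>i$; $\mathrm{IDes}(\sigma)=\mathrm{Des}(\sigma^{-1})$, the set of $i\in[n-1]$ such that $i+1$ appears to the left of $i$ in $\sigma$. For an increasing binary tree $T$ on $[n]$ (root labeled $1$): an inversion of $T$ is a pair of vertices $(i,j)$ with $i>j$ such that either $j$ lies to the right of the path from the root $1$ to $i$, or $j$ is on the path from the root to $i$ and the left child of $j$ is on this path. $\mathrm{inv}(T)$ is the number of inversions of $T$; $\mathrm{IDes}(T)$ is the set of $i-1$ such that $(i,i-1)$ is an inversion of $T$; $R_T$ is the set of vertices of $T$ that do not belong to any left subtree of $T$ (i.e. the root together with the vertices reached from it by moving only to right children). *)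

(* Defs.v *)
From mathcomp Require Import all_boot.
Set Implicit Arguments. Unset Strict Implicit. Unset Printing Implicit Defensive.

Inductive btree : Type := Leaf | Node of btree & nat & btree.

Definition seqmin (s : seq nat) : nat := foldr minn (head 0 s) s.

(* Psi(pi): root = least letter i, left subtree Psi(sigma), right Psi(tau),
   where pi = sigma i tau.  Fuel = size of the word (structural recursion). *)
Fixpoint psi_aux (fuel : nat) (s : seq nat) : btree :=
  match fuel with
  | 0 => Leaf
  | f.+1 =>
    if s is [::] then Leaf else
    let m := seqmin s in
    let k := index m s in
    Node (psi_aux f (take k s)) m (psi_aux f (drop k.+1 s))
  end.

Definition Psi (s : seq nat) : btree := psi_aux (size s) s.

Definition inv_word (s : seq nat) : nat :=
  \sum_(i < size s) \sum_(j < size s) ((i < j) && (nth 0 s j < nth 0 s i)).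

Definition RLmin_word (s : seq nat) : nat :=
  \sum_(i < size s) all (fun y => nth 0 s i < y) (drop i.+1 s).

(* IDes(s) = Des(s^{-1}): the i in [n-1] such that i+1 appears left of i. *)
Definition IDes_word (s : seq nat) : pred nat :=
  fun i => (0 < i < size s) && (index i.+1 s < index i s).

Fixpoint labels (t : btree) : seq nat :=
  match t with Leaf => [::] | Node l a r => labels l ++ a :: labels r end.

(* address of the vertex labelled i: sequence of steps from the root,
   false = go to left child, true = go to right child *)
Fixpoint addr (t : btree) (i : nat) : option (seq bool) :=
  match t with
  | Leaf => None
  | Node l a r =>
    if a == i then Some [::] else
    match addr l i with
    | Some p => Some (false :: p)
    | None => omap (cons true) (addr r i)
    end
  end.

(* q (address of j) lies to the right of the path from the root to the vertex
   with address p: j is not on the path, and it is in the right subtree of some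
   vertex v of the path at depth k, where the path does not continue to the
   right child of v. *)
Definition right_of_path (p q : seq bool) : bool :=
  has (fun k => [&& take k q == take k p, nth false q k &
                    (size p <= k) || ~~ nth true p k]) (iota 0 (size q)).

(* q is on the path to p and the left child of (the vertex at) q is on the path *)
Definition on_path_left (p q : seq bool) : bool :=
  [&& take (size q) p == q, size q < size p & ~~ nth true p (size q)].

Definition tinv_pair (t : btree) (i j : nat) : bool :=
  (j < i) &&
  match addr t i, addr t j with
  | Some p, Some q => right_of_path p q || on_path_left p q
  | _, _ => false
  end.

Definition inv_tree (t : btree) : nat :=
  \sum_(i <- labels t) \sum_(j <- labels t) tinv_pair t i j.

Definition IDes_tree (t : btree) : pred nat :=
  fun k => (k.+1 \in labels t) && tinv_pair t k.+1 k.

(* R_T: vertices not in any left subtree (address uses only right steps) *)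
Definition R_T (t : btree) : seq nat :=
  [seq i <- labels t | if addr t i is Some p then all id p else false].

(* Main.v *)
Require Import Defs.
From mathcomp Require Import all_boot zify.
Set Warnings "-notation-overridden".
Set Implicit Arguments. Unset Strict Implicit.

Lemma iota1 n : iota 1 n = map S (iota 0 n).
Proof. by rewrite -(iotaDl 1). Qed.

Lemma rop_nil p : right_of_path p [::] = false.
Proof. by []. Qed.

Lemma rop_cons b c p q :
  right_of_path (b :: p) (c :: q) = if b == c then right_of_path p q else c && ~~ b.
Proof.
rewrite /right_of_path /= iota1 has_map /=.
case: b; case: c => //=; apply/negbTE/hasP => -[k _]; by rewrite /preim /=.
Qed.

Lemma rop_nilp c q : right_of_path [::] (c :: q) = c.
Proof.
rewrite /right_of_path /= iota1 has_map /=.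
case: c => //=; apply/negbTE/hasP => -[k _]; by rewrite /preim /=.
Qed.

Lemma opl_cons b c p q :
  on_path_left (b :: p) (c :: q) = if b == c then on_path_left p q else false.
Proof.
rewrite /on_path_left /= eqseq_cons; case: (b == c) => //.
Qed.

Lemma opl_nilp q : on_path_left [::] q = false.
Proof. by rewrite /on_path_left /= andbF. Qed.

Lemma opl_nil p : on_path_left p [::] = (0 < size p) && ~~ nth true p 0.
Proof. by rewrite /on_path_left take0. Qed.

Lemma addr_none t i : i \notin labels t -> addr t i = None.
Proof.
elim: t => //= l IHl a r IHr'.
rewrite mem_cat in_cons !negb_or => /and3P[Hl Ha Hr].
by rewrite eq_sym (negbTE Ha) IHl // IHr'.
Qed.

Lemma addr_in t i p : addr t i = Some p -> i \in labels t.
Proof.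
by case: (boolP (i \in labels t)) => // /addr_none ->.
Qed.

Lemma addr_nodeP l a r i p : addr (Node l a r) i = Some p ->
  [\/ i = a /\ p = [::],
      exists2 p', p = false :: p' & addr l i = Some p'
    | exists2 p', p = true :: p' & addr r i = Some p'].
Proof.
rewrite /=; case: eqP => [-> [<-]|_]; first by constructor 1.
case: (addr l i) => [p'|] ; first by move=> [<-]; constructor 2; exists p'.
by case: (addr r i) => [p'|] //= [<-]; constructor 3; exists p'.
Qed.

Lemma idx_l l a r i : i \in labels l ->
  index i (labels (Node l a r)) = index i (labels l).
Proof. by move=> H; rewrite /= index_cat H. Qed.

Lemma idx_a l a r : uniq (labels (Node l a r)) ->
  index a (labels (Node l a r)) = size (labels l).
Proof.
rewrite /= cat_uniq /= => /and3P[_ /norP[Ha _] _].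
by rewrite index_cat (negbTE Ha) /= eqxx addn0.
Qed.

Lemma idx_r l a r i : uniq (labels (Node l a r)) -> i \in labels r ->
  index i (labels (Node l a r)) = size (labels l) + (index i (labels r)).+1.
Proof.
rewrite /= cat_uniq /= => /and3P[_ /norP[Ha /hasPn Hr] /andP[Har _]] Hi.
have Hl : i \notin labels l by apply: Hr.
have Hia : a != i by apply: contraNneq Har => ->.
by rewrite index_cat (negbTE Hl) /= (negbTE Hia).
Qed.

Lemma uniq_node l a r : uniq (labels (Node l a r)) ->
  [/\ uniq (labels l), uniq (labels r), a \notin labels l, a \notin labels r
    & forall i, i \in labels r -> i \notin labels l].
Proof.
rewrite /= cat_uniq /= => /and3P[Ul /norP[Ha /hasPn Hr] /andP[Har Ur]].
split=> // i Hi; exact: Hr.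
Qed.

Lemma addr_order t : uniq (labels t) -> forall i j p q, i != j ->
  addr t i = Some p -> addr t j = Some q ->
  (right_of_path p q || on_path_left p q) = (index i (labels t) < index j (labels t)).
Proof.
elim: t => // l IHl a r IHr U i j p q Hij Hp Hq.
have [Ul Ur Hal Har Hrl] := uniq_node U.
move: Hij; case: (addr_nodeP Hp) => [[-> ->]|[p' -> Hp']|[p' -> Hp']];
case: (addr_nodeP Hq) => [[-> ->]|[q' -> Hq']|[q' -> Hq']]; move=> Hij.
  by rewrite eqxx in Hij.
- rewrite opl_nilp orbF rop_nilp (idx_a U) (idx_l _ _ (addr_in Hq')).
  by rewrite ltnNge ltnW // index_mem (addr_in Hq').
- rewrite opl_nilp orbF rop_nilp (idx_a U) (idx_r U (addr_in Hq')).
  by rewrite addnS ltnS leq_addr.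
- rewrite (idx_a U) (idx_l _ _ (addr_in Hp')) rop_nil opl_nil /=.
  by rewrite index_mem (addr_in Hp').
- rewrite !(idx_l _ _ (addr_in Hp')) (idx_l _ _ (addr_in Hq')) rop_cons opl_cons /=.
  exact: IHl.
- rewrite (idx_l _ _ (addr_in Hp')) (idx_r U (addr_in Hq')) rop_cons opl_cons /=.
  symmetry; apply: (leq_trans _ (leq_addr _ _)); by rewrite index_mem (addr_in Hp').
- rewrite (idx_a U) (idx_r U (addr_in Hp')) rop_nil opl_nil /=.
  by rewrite ltnNge leq_addr.
- rewrite (idx_l _ _ (addr_in Hq')) (idx_r U (addr_in Hp')) rop_cons opl_cons /=.
  symmetry; apply/negbTE; rewrite -leqNgt; apply: (leq_trans _ (leq_addr _ _)).
  by rewrite ltnW // index_mem (addr_in Hq').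
- rewrite (idx_r U (addr_in Hp')) (idx_r U (addr_in Hq')) rop_cons opl_cons /=.
  by rewrite ltn_add2l ltnS; exact: IHr.
Qed.

Lemma foldr_min_in a s : foldr minn a s \in a :: s.
Proof.
elim: s => [|x s IH] /=; first by rewrite inE.
rewrite /minn; case: ifP => _; first by rewrite !inE eqxx orbT.
move: IH; rewrite !inE => /orP[->|->]; by rewrite ?orbT.
Qed.

Lemma foldr_min_le a s y : y \in a :: s -> foldr minn a s <= y.
Proof.
elim: s => [|x s IH] /=; first by rewrite inE => /eqP ->.
rewrite !inE geq_min => /or3P[H|H|H].
- by rewrite IH ?inE ?H ?orbT.
- by rewrite (eqP H) leqnn.
- by rewrite IH ?inE ?H ?orbT.
Qed.

Lemma seqmin_in s : s != [::] -> seqmin s \in s.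
Proof.
case: s => // x s _; rewrite /seqmin /=.
move: (foldr_min_in x (x :: s)) => /=; rewrite in_cons; case/orP => [/eqP ->|//].
by rewrite inE eqxx.
Qed.

Lemma seqmin_le s y : y \in s -> seqmin s <= y.
Proof. case: s => // x s H; apply: foldr_min_le; by rewrite inE H orbT. Qed.

Lemma psi_split f s : s != [::] ->
  let m := seqmin s in let k := index m s in
  psi_aux f.+1 s = Node (psi_aux f (take k s)) m (psi_aux f (drop k.+1 s)).
Proof. by case: s. Qed.

Lemma split_min s : s != [::] ->
  s = take (index (seqmin s) s) s ++ seqmin s :: drop (index (seqmin s) s).+1 s.
Proof.
move=> /seqmin_in H.
by rewrite -{1}(cat_take_drop (index (seqmin s) s) s) (drop_nth (seqmin s)) ?index_mem // nth_index.
Qed.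

Lemma psi_labels f s : size s <= f -> labels (psi_aux f s) = s.
Proof.
elim: f s => [|f IH] s; first by rewrite leqn0 => /nilP ->.
case: (altP (s =P [::])) => [->|ns] // Hs.
rewrite psi_split //= !IH.
- exact/esym/split_min.
- rewrite size_drop; lia.
- have H : index (seqmin s) s < size s by rewrite index_mem seqmin_in.
  rewrite size_take.
  rewrite H; lia.
Qed.

Lemma RLmin_cons x s : RLmin_word (x :: s) = all (fun y => x < y) s + RLmin_word s.
Proof.
rewrite /RLmin_word /= big_ord_recl /= drop0; congr (_ + _).
Qed.

Lemma RLmin_cat sg m t : all (fun y => m < y) sg ->
  RLmin_word (sg ++ m :: t) = RLmin_word (m :: t).
Proof.
elim: sg => //= x sg IH /andP[Hx Hs].
rewrite RLmin_cons IH // all_cat /= ltnNge (ltnW Hx) /= andbF.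
by rewrite -[nat_of_bool false]/0 add0n.
Qed.

Lemma R_T_node l a r : uniq (labels (Node l a r)) -> R_T (Node l a r) = a :: R_T r.
Proof.
move=> U; have [Ul Ur Hal Har Hrl] := uniq_node U.
rewrite /R_T /= filter_cat /= eqxx /=.
have -> : [seq i <- labels l | match addr (Node l a r) i with Some p => all id p | None => false end] = [::].
  apply/eqP; rewrite -[_ == _]negbK -has_filter; apply/hasPn => i Hi /=.
  have Hia : a != i by apply: contraNneq Hal => ->.
  rewrite (negbTE Hia); case: (addr l i) => // .
  rewrite addr_none //; apply/negP => Hir; by move: (Hrl _ Hir); rewrite Hi.
congr (_ :: _); apply: eq_in_filter => i Hi /=.
have Hia : a != i by apply: contraNneq Har => ->.
by rewrite (negbTE Hia) addr_none ?Hrl //; case: (addr r i).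
Qed.

Lemma psi_RL f s : uniq s -> size s <= f -> RLmin_word s = size (R_T (psi_aux f s)).
Proof.
elim: f s => [|f IH] s; first by move=> _; rewrite leqn0 => /nilP ->; rewrite /RLmin_word big_ord0.
case: (altP (s =P [::])) => [->|ns] Us Hs; first by rewrite /RLmin_word big_ord0.
have Hl := psi_labels Hs.
have U' : uniq (labels (psi_aux f.+1 s)) by rewrite Hl.
rewrite psi_split // in U'.
rewrite psi_split // (R_T_node U').
set m := seqmin s; set k := index m s.
have E := split_min ns; rewrite -/m -/k in E.
have : uniq (take k s ++ m :: drop k.+1 s) by rewrite -E.
rewrite cat_uniq /= => /and3P[_ /norP[Hms _] /andP[Hmt Ut]].
have Hlt y : y \in s -> y != m -> m < y.
  by move=> Hy Hne; rewrite ltn_neqAle eq_sym Hne seqmin_le.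
rewrite {1}E RLmin_cat; last first.
  apply/allP => y Hy; apply: Hlt; first by rewrite E mem_cat Hy.
  by apply: contraNneq Hms => <-.
rewrite RLmin_cons (IH _ Ut); last by rewrite size_drop; lia.
have -> : all (fun y => m < y) (drop k.+1 s).
  apply/allP => y Hy; apply: Hlt; first by rewrite E mem_cat in_cons Hy !orbT.
  by apply: contraNneq Hmt => <-.
by [].
Qed.

Lemma addr_some t i : i \in labels t -> exists p, addr t i = Some p.
Proof.
elim: t => // l IHl a r IHr /=; rewrite mem_cat in_cons => H.
case: eqP => [_|ne]; first by exists [::].
case E: (addr l i) => [p|]; first by exists (false :: p).
have : i \in labels r.
  move: H => /or3P[Hl|/eqP Hia|//].
  - by have [p Hp] := IHl Hl; rewrite Hp in E.
  - by case: ne; rewrite Hia.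
by move/IHr => [p ->]; exists (true :: p).
Qed.

Lemma tinv_eq t i j : uniq (labels t) -> i \in labels t -> j \in labels t ->
  tinv_pair t i j = (j < i) && (index i (labels t) < index j (labels t)).
Proof.
move=> U Hi Hj; rewrite /tinv_pair.
case: (ltnP j i) => //= Hji.
have [p Hp] := addr_some Hi; have [q Hq] := addr_some Hj.
rewrite Hp Hq; apply: (addr_order U _ Hp Hq).
by rewrite neq_ltn Hji orbT.
Qed.

Theorem proposition4p4 (n : nat) (s : seq nat) :
  perm_eq s (iota 1 n) ->
  let T := Psi s in
  [/\ inv_word s = inv_tree T,
      RLmin_word s = size (R_T T) &
      IDes_word s =i IDes_tree T].
Proof.
move=> Hp T.
have Us : uniq s by rewrite (perm_uniq Hp) iota_uniq.
have Hl : labels T = s by apply: psi_labels.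
have Hsz : size s = n by rewrite (perm_size Hp) size_iota.
have Hmem x : (x \in s) = (0 < x <= n).
  by rewrite (perm_mem Hp) mem_iota; lia.
split.
- rewrite /inv_tree Hl /inv_word.
  rewrite (big_nth 0) big_mkord; apply: eq_bigr => a _.
  rewrite (big_nth 0) big_mkord; apply: eq_bigr => b _.
  by rewrite tinv_eq ?Hl ?mem_nth // !index_uniq // andbC.
- exact: (psi_RL Us (leqnn _)).
- move=> k; change (IDes_word s k = IDes_tree T k); rewrite /IDes_word /IDes_tree Hl Hsz.
  case: (boolP (k.+1 \in s)) => H1; last first.
    rewrite andFb; move: H1; rewrite Hmem => H1.
    have Hf : (k < n) = false by lia.
    by rewrite Hf andbF.
  rewrite andTb; move: (H1); rewrite Hmem => H1'.
  case: (boolP (k \in s)) => Hk.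
  + rewrite tinv_eq ?Hl //; move: Hk; rewrite Hmem => Hk.
    have -> : 0 < k by case/andP: Hk.
    have Hf : k < n by lia.
    by rewrite Hf ltnSn.
  + have Hk0 : k = 0 by move: Hk; rewrite Hmem; lia.
    have HN : addr T k = None by apply: addr_none; rewrite Hl.
    rewrite Hk0 /= /tinv_pair /= -Hk0 HN.
    by case: (addr T _).
Qed.
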